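(* Let $P_{Y|X}$ be a BISO channel with output alphabet $\{0,\pm1,\dots,\pm l\}$ and transition probabilities $p_y=P_{Y|X}(y|0)=P_{Y|X}(-y|1)$. Then $$\eta_{KL}(P)=\sum_{y>0}\frac{(p_y-p_{-y})^2}{p_y+p_{-y}},$$ where summands with $p_y+p_{-y}=0$ are taken to be $0$.
   Context: A binary-input symmetric-output (BISO) channel is a channel $P_{Y|X}$ with input alphabet $\{0,1\}$ and finite output alphabet $\mathcal Y=\{0,\pm1,\dots,\pm l\}$ for some integer $l\ge 1$ (some transition probabilities may be zero), such that $P_{Y|X}(y|0)=P_{Y|X}(-y|1)=:p_y$ for all $y\in\mathcal Y$. For a channel $P=P_{Y|X}$ and an input distribution $P_X$, write $P\circ P_X$ for the induced output distribution. The KL contraction coefficient is $\eta_{KL}(P)=\sup_{P_X,Q_X}\frac{D(P\circ P_X\|P\circ Q_X)}{D(P_X\|Q_X)}$, the supremum over input distributions with $0<D(P_X\|Q_X)<\infty$, where $D$ is the Kullback–Leibler divergence. *)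

(* Defs.v *)
From HB Require Import structures.
From mathcomp Require Import all_boot all_order all_algebra.
From mathcomp Require Import all_classical all_reals all_analysis.
Set Implicit Arguments. Unset Strict Implicit. Unset Printing Implicit Defensive.
Import Order.TTheory GRing.Theory Num.Theory.
Local Open Scope ring_scope.
Local Open Scope classical_set_scope.

Section Defs.
Variable R : realType.

Definition outs (l : nat) : seq int :=
  [seq (i%:Z - l%:Z)%R | i <- iota 0 (2 * l + 1)].

(** [p] is a BISO channel on output alphabet outs l: p y = P(y|0) = P(-y|1),
    and P(.|0) is a probability distribution on the alphabet. *)
Definition biso (l : nat) (p : int -> R) : Prop :=
  (1 <= l)%N /\ (forall y, y \in outs l -> 0 <= p y) /\ \sum_(y <- outs l) p y = 1.

(** Transition probabilities P_{Y|X}(y|x); input 0 is [false], input 1 is [true]. *)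
Definition chan (p : int -> R) (x : bool) (y : int) : R :=
  if x then p (- y) else p y.

Definition bin_dist (PX : bool -> R) : Prop :=
  0 <= PX false /\ 0 <= PX true /\ PX false + PX true = 1.

Definition out_dist (p : int -> R) (PX : bool -> R) (y : int) : R :=
  \sum_(x <- [:: false; true]) PX x * chan p x y.

(** Absolute continuity P << Q on the finite alphabet s; equivalent to D(P||Q) < oo. *)
Definition abs_cont {T : eqType} (s : seq T) (P Q : T -> R) : Prop :=
  forall x, x \in s -> Q x = 0 -> P x = 0.

(** KL divergence on the finite alphabet s (value when P << Q; 0 ln 0 = 0). *)
Definition KL {T : eqType} (s : seq T) (P Q : T -> R) : R :=
  \sum_(x <- s | P x != 0) P x * ln (P x / Q x).

Definition KL_ratios (l : nat) (p : int -> R) : set R :=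
  [set r | exists PX QX : bool -> R,
      [/\ bin_dist PX, bin_dist QX, abs_cont [:: false; true] PX QX,
          0 < KL [:: false; true] PX QX &
          r = KL (outs l) (out_dist p PX) (out_dist p QX)
              / KL [:: false; true] PX QX]].

Definition eta_KL (l : nat) (p : int -> R) : R := sup (KL_ratios l p).

Definition biso_formula (l : nat) (p : int -> R) : R :=
  \sum_(1 <= i < l.+1)
     (if p i%:Z + p (- i%:Z) == 0 then 0
      else (p i%:Z - p (- i%:Z)) ^+ 2 / (p i%:Z + p (- i%:Z))).

End Defs.

(* Main.v *)
Require Import Defs.
From HB Require Import structures.
From mathcomp Require Import all_boot all_order all_algebra.
From mathcomp Require Import all_classical all_reals all_analysis.
From mathcomp Require Import ring lra zify.
Import Order.TTheory GRing.Theory Num.Theory.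
Local Open Scope ring_scope.

Import numFieldNormedType.Exports.
Local Open Scope classical_set_scope.

Section S.
Variable R : realType.

Lemma anchor (f d : R -> R) (x y : R) :
  (forall t, (x < t < y) || (y < t < x) -> is_derive t 1 f (d t)) ->
  (forall t, (x < t < y) || (y < t < x) -> 0 <= (t - x) * d t) ->
  (forall t, (x <= t <= y) || (y <= t <= x) -> {for t, continuous f}) ->
  f x = 0 -> 0 <= f y.
Proof.
move=> hd hs hc fx0.
have [xy|yx|exy] := ltgtP x y; last by rewrite -exy fx0.
- have cc : {within `[x, y], continuous f}.
    apply: continuous_in_subspaceT => t; rewrite inE /= in_itv /= => ht.
    by apply: hc; rewrite ht.
  have hd' : forall t, t \in `]x, y[%R -> is_derive t 1 f (d t).
    by move=> t; rewrite in_itv /= => ht; apply: hd; rewrite ht.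
  have [c cin e] := MVT xy hd' cc.
  move: cin; rewrite in_itv /= => /andP[xc cy].
  have := hs c; rewrite xc cy => /(_ isT).
  move: e; rewrite fx0 subr0 => ->.
  have cx : 0 < c - x by rewrite subr_gt0.
  rewrite pmulr_rge0 // => dc. by rewrite mulr_ge0 // subr_ge0 ltW.
- have cc : {within `[y, x], continuous f}.
    apply: continuous_in_subspaceT => t; rewrite inE /= in_itv /= => ht.
    by apply: hc; rewrite ht orbT.
  have hd' : forall t, t \in `]y, x[%R -> is_derive t 1 f (d t).
    by move=> t; rewrite in_itv /= => ht; apply: hd; rewrite ht orbT.
  have [c cin e] := MVT yx hd' cc.
  move: cin; rewrite in_itv /= => /andP[yc cx].
  have := hs c; rewrite yc cx orbT => /(_ isT).
  have cx' : c - x < 0 by rewrite subr_lt0.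
  rewrite nmulr_rge0 // => dc.
  have : d c * (x - y) <= 0 by rewrite mulr_le0_ge0 // subr_ge0 ltW.
  by rewrite -e fx0 sub0r oppr_le0.
Qed.
Implicit Types (a b c t : R).

Lemma is_derive_ext (f g : R -> R) t df :
  (forall s, f s = g s) -> is_derive t 1 f df -> is_derive t 1 g df.
Proof. by move=> e; have -> : f = g by apply/funext. Qed.

Lemma der_cont (f : R -> R) t df : is_derive t 1 f df -> {for t, continuous f}.
Proof.
move=> H; apply/differentiable_continuous/derivable1_diffP.
by case: H.
Qed.

Lemma der_lin a b t : is_derive t 1 (fun s : R => a + b * s) b.
Proof.
have H := is_deriveD (is_derive_cst a t 1) (is_deriveZ b (is_derive_id t 1)).
apply: is_derive_ext (is_derive_eq H _).
  by move=> s.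
by rewrite add0r /GRing.scale /= mulr1.
Qed.

Lemma der_lnaff c a t : 0 < 1 + a * t ->
  is_derive t 1 (fun s => c * ln (1 + a * s)) (c * (a / (1 + a * t))).
Proof.
move=> h.
have H1 := @is_derive1_comp R (@ln R) (fun s => 1 + a * s) t _ _ (is_derive1_ln h) (der_lin 1 a t).
have H2 := is_deriveZ c H1.
apply: is_derive_ext (is_derive_eq H2 _) => //.
by rewrite /= mulrC.
Qed.

Lemma cont_lnaff c a t : c = 0 \/ 0 < 1 + a * t ->
  {for t, continuous (fun s => c * ln (1 + a * s))}.
Proof.
case=> [->|h]; last by apply: (@der_cont _ t (c * (a / (1 + a * t)))); apply: der_lnaff.
have -> : (fun s => 0 * ln (1 + a * s)) = cst (0:R) by apply/funext => s; rewrite mul0r.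
exact: cst_continuous.
Qed.

Definition phi (u v : R) := u * ln (u / v).
Definition F (x y : R) :=
  phi ((1 + x) / 2) ((1 + y) / 2) + phi ((1 - x) / 2) ((1 - y) / 2).
Definition Kc (z : R) := (1 + z) / 2 * ln (1 + z) + (1 - z) / 2 * ln (1 - z).
Definition G (a x t : R) :=
  Kc (a * x) + (- ((1 + a * x) / 2)) * ln (1 + a * t)
             + (- ((1 - a * x) / 2)) * ln (1 + (- a) * t).

Lemma phi_split c d : 0 <= c -> (c = 0 \/ 0 < d) ->
  phi (c / 2) (d / 2) = c / 2 * ln c - c / 2 * ln d.
Proof.
move=> c0 [->|d0]; first by rewrite /phi !mul0r subrr.
have [->|cp] := eqVneq c 0; first by rewrite /phi !mul0r subrr.
have cp' : 0 < c by rewrite lt_neqAle eq_sym cp c0.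
rewrite /phi -mulrBr; congr (_ * _).
have -> : c / 2 / (d / 2) = c / d by field; rewrite gt_eqF.
by rewrite ln_div // posrE.
Qed.

Lemma phi_same c : phi c c = 0.
Proof.
rewrite /phi; have [->|c0] := eqVneq c 0; first by rewrite mul0r.
by rewrite divff // ln1 mulr0.
Qed.

Lemma F_same z : F z z = 0.
Proof. by rewrite /F !phi_same addr0. Qed.

Lemma FG a x t : 0 <= 1 + a * x -> 0 <= 1 - a * x ->
  (1 + a * x = 0 \/ 0 < 1 + a * t) -> (1 - a * x = 0 \/ 0 < 1 + (- a) * t) ->
  F (a * x) (a * t) = G a x t.
Proof.
move=> h1 h2 h3 h4.
rewrite mulNr in h4.
rewrite /F /G /Kc mulNr phi_split // phi_split //.
by rewrite !mulNr; lra.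
Qed.

Lemma der_G a x t : 0 < 1 + a * t -> 0 < 1 - a * t ->
  is_derive t 1 (G a x) (a ^+ 2 * (t - x) / (1 - a ^+ 2 * t ^+ 2)).
Proof.
move=> h1 h2.
have h2' : 0 < 1 + (- a) * t by rewrite mulNr.
have H := is_deriveD (is_deriveD (is_derive_cst (Kc (a * x)) t 1)
   (der_lnaff (- ((1 + a * x) / 2)) _ _ h1)) (der_lnaff (- ((1 - a * x) / 2)) _ _ h2').
apply: is_derive_ext (is_derive_eq H _) => //.
rewrite add0r mulNr.
have e : 1 - a ^+ 2 * t ^+ 2 = (1 + a * t) * (1 - a * t) by ring.
rewrite e; field.
by rewrite !gt_eqF.
Qed.

Lemma cont_G a x t : (- ((1 + a * x) / 2) = 0 \/ 0 < 1 + a * t) ->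
  (- ((1 - a * x) / 2) = 0 \/ 0 < 1 + (- a) * t) ->
  {for t, continuous (G a x)}.
Proof.
move=> h1 h2.
have -> : G a x = (cst (Kc (a * x)) + (fun s => (- ((1 + a * x) / 2)) * ln (1 + a * s)))
   + (fun s => (- ((1 - a * x) / 2)) * ln (1 + (- a) * s)) by apply/funext.
apply: continuousD; last exact: cont_lnaff.
apply: continuousD; last exact: cont_lnaff.
exact: cst_continuous.
Qed.

Lemma F_sym x y : F (- x) (- y) = F x y.
Proof. by rewrite /F !opprK addrC. Qed.

Lemma core x y a : -1 <= x <= 1 -> -1 < y < 1 -> -1 <= a <= 1 ->
  F (a * x) (a * y) <= a ^+ 2 * F x y.
Proof.
move=> /andP[x1 x2] /andP[y1 y2] /andP[a1 a2].
have [->|a1'] := eqVneq a 1; first by rewrite !mul1r expr1n mul1r.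
have [->|a2'] := eqVneq a (-1).
  by rewrite !mulN1r F_sym sqrrN expr1n mul1r.
have a1s : -1 < a by rewrite lt_neqAle eq_sym a2' a1.
have a2s : a < 1 by rewrite lt_neqAle a1' a2.
pose H t := a ^+ 2 * G 1 x t - G a x t.
pose d t := a ^+ 2 * (1 ^+ 2 * (t - x) / (1 - 1 ^+ 2 * t ^+ 2))
            - a ^+ 2 * (t - x) / (1 - a ^+ 2 * t ^+ 2).
have key : 0 <= H y.
  apply: (@anchor H d x y).
  - move=> t ht.
    have [t1 t2] : -1 < t /\ t < 1.
      by case/orP: ht => /andP[h h']; split; lra.
    have q1 : 0 < 1 + 1 * t by lra.
    have q2 : 0 < 1 - 1 * t by lra.
    have q3 : 0 < 1 + a * t by nra.
    have q4 : 0 < 1 - a * t by nra.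
    have -> : H = ((a ^+ 2) \*: G 1 x) - G a x by apply/funext.
    apply: is_derive_eq (is_deriveB (is_deriveZ (a ^+ 2) (der_G _ x _ q1 q2)) (der_G _ x _ q3 q4)) _.
    by rewrite /d.
  - move=> t ht.
    have [t1 t2] : -1 < t /\ t < 1.
      by case/orP: ht => /andP[h h']; split; lra.
    have q1 : 0 < 1 - t ^+ 2 by nra.
    have q3 : 0 < 1 - a ^+ 2 * t ^+ 2 by nra.
    have -> : (t - x) * d t = (a ^+ 2 * (t - x) ^+ 2 * (1 - a ^+ 2) * t ^+ 2)
        / ((1 - t ^+ 2) * (1 - a ^+ 2 * t ^+ 2)).
      rewrite /d expr1n !mul1r; field.
      by rewrite exprMn !gt_eqF.
    apply: divr_ge0; last by apply: mulr_ge0; apply: ltW.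
    apply: mulr_ge0; last exact: sqr_ge0.
    apply: mulr_ge0; first by apply: mulr_ge0; exact: sqr_ge0.
    nra.
  - move=> t ht.
    have [t1 t2] : -1 <= t /\ t <= 1.
      by case/orP: ht => /andP[h h']; split; lra.
    have -> : H = (cst (a ^+ 2) * G 1 x) - G a x by apply/funext.
    apply: continuousB; first apply: continuousM; first exact: cst_continuous.
    + apply: cont_G.
      * have [tp|tn] := ltP (-1) t; first by right; lra.
        left; case/orP: ht => /andP[h h']; lra.
      * have [tp|tn] := ltP t 1; first by right; lra.
        left; case/orP: ht => /andP[h h']; lra.
    + apply: cont_G; right; nra.
  - have e1 : G 1 x x = F (1 * x) (1 * x).
      by rewrite FG //; rewrite ?mul1r; try (by lra); right; lra.
    have e2 : G a x x = F (a * x) (a * x).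
      by rewrite FG //; try (by nra); right; nra.
    by rewrite /H e1 e2 !F_same mulr0 subr0.
have e1 : G 1 x y = F (1 * x) (1 * y).
  by rewrite FG //; rewrite ?mul1r; try (by lra); right; lra.
have e2 : G a x y = F (a * x) (a * y).
  by rewrite FG //; try (by nra); right; nra.
by move: key; rewrite /H e1 e2 !mul1r subr_ge0.
Qed.

Lemma der_sq k s t :
  is_derive t 1 (fun u => k * (s - u) ^+ 2) (- (2 * k * (s - t))).
Proof.
have H := is_deriveZ k (is_deriveX 2 (der_lin s (-1) t)).
apply: is_derive_ext (is_derive_eq H _).
  by move=> u /=; rewrite /GRing.scale /= expr2 mulrfctE mulN1r -expr2.
by rewrite /GRing.scale /= expr1 mulN1r; ring.
Qed.

Lemma B1 s : -1 < s < 1 -> s ^+ 2 / 2 <= F s 0.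
Proof.
move=> /andP[s1 s2].
pose P t := G 1 s t + (- 2^-1) * (s - t) ^+ 2.
pose d t := 1 ^+ 2 * (t - s) / (1 - 1 ^+ 2 * t ^+ 2) + - (2 * (- 2^-1) * (s - t)).
have hder : forall t, -1 < t < 1 -> is_derive t 1 P (d t).
  move=> t /andP[t1 t2].
  have q1 : 0 < 1 + 1 * t by lra.
  have q2 : 0 < 1 - 1 * t by lra.
  exact: is_deriveD (der_G _ s _ q1 q2) (der_sq _ s t).
have key : 0 <= P 0.
  apply: (@anchor P d s 0).
  - move=> t ht; apply: hder.
    by case/orP: ht => /andP[h h']; lra.
  - move=> t ht.
    have [t1 t2] : -1 < t /\ t < 1.
      by case/orP: ht => /andP[h h']; split; lra.
    have q1 : 0 < 1 - t ^+ 2 by nra.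
    have -> : (t - s) * d t = ((t - s) ^+ 2 * t ^+ 2) / (1 - t ^+ 2).
      rewrite /d expr1n !mul1r; field.
      by rewrite gt_eqF.
    apply: divr_ge0; last exact: ltW.
    by apply: mulr_ge0; exact: sqr_ge0.
  - move=> t ht.
    apply: (@der_cont _ _ (d t)); apply: hder.
    by case/orP: ht => /andP[h h']; lra.
  - have e1 : G 1 s s = F (1 * s) (1 * s).
      by rewrite FG //; rewrite ?mul1r; try (by lra); right; lra.
    by rewrite /P e1 F_same subrr expr0n /= mulr0 addr0.
have e1 : G 1 s 0 = F (1 * s) (1 * 0).
  by rewrite FG //; rewrite ?mul1r; try (by lra); right; lra.
move: key; rewrite /P e1 !mul1r subr0.
lra.
Qed.

Lemma B2 s : -1 < s < 1 -> F s 0 <= s ^+ 2 / (2 * (1 - s ^+ 2)).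
Proof.
move=> /andP[s1 s2].
have qs : 0 < 1 - s ^+ 2 by nra.
pose k := (2 * (1 - s ^+ 2))^-1.
pose P t := k * (s - t) ^+ 2 - G 1 s t.
pose d t := - (2 * k * (s - t)) - 1 ^+ 2 * (t - s) / (1 - 1 ^+ 2 * t ^+ 2).
have hder : forall t, -1 < t < 1 -> is_derive t 1 P (d t).
  move=> t /andP[t1 t2].
  have q1 : 0 < 1 + 1 * t by lra.
  have q2 : 0 < 1 - 1 * t by lra.
  exact: is_deriveB (der_sq _ s t) (der_G _ s _ q1 q2).
have key : 0 <= P 0.
  apply: (@anchor P d s 0).
  - move=> t ht; apply: hder.
    by case/orP: ht => /andP[h h']; lra.
  - move=> t ht.
    have [t1 t2] : -1 < t /\ t < 1.
      by case/orP: ht => /andP[h h']; split; lra.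
    have q1 : 0 < 1 - t ^+ 2 by nra.
    have st : 0 <= s ^+ 2 - t ^+ 2 by case/orP: ht => /andP[h h']; nra.
    have -> : (t - s) * d t = ((t - s) ^+ 2 * (s ^+ 2 - t ^+ 2)) / ((1 - s ^+ 2) * (1 - t ^+ 2)).
      rewrite /d /k expr1n !mul1r; field.
      by rewrite !gt_eqF.
    apply: divr_ge0; last by apply: mulr_ge0; exact: ltW.
    by apply: mulr_ge0 => //; exact: sqr_ge0.
  - move=> t ht.
    apply: (@der_cont _ _ (d t)); apply: hder.
    by case/orP: ht => /andP[h h']; lra.
  - have e1 : G 1 s s = F (1 * s) (1 * s).
      by rewrite FG //; rewrite ?mul1r; try (by lra); right; lra.
    by rewrite /P e1 F_same subrr expr0n /= mulr0 subr0.
have e1 : G 1 s 0 = F (1 * s) (1 * 0).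
  by rewrite FG //; rewrite ?mul1r; try (by lra); right; lra.
move: key; rewrite /P e1 !mul1r subr0 subr_ge0 /k.
by rewrite invfM mulrC mulrA.
Qed.
Lemma sum_outs l (G : int -> R) :
  \sum_(y <- outs l) G y = G 0 + \sum_(1 <= i < l.+1) (G i%:Z + G (- i%:Z)).
Proof.
rewrite /outs big_map.
have -> : iota 0 (2 * l + 1) = index_iota 0 (2 * l + 1) by rewrite /index_iota subn0.
elim: l G => [|l IH] G.
  rewrite big_nat1 big_geq //. rewrite [G 0 + _]addr0. reflexivity.
have -> : (2 * l.+1 + 1 = (2 * l + 1).+2)%N by lia.
rewrite big_nat_recl // big_nat_recr //=.
under eq_bigr => i _ do have -> : (i.+1%:Z - l.+1%:Z = i%:Z - l%:Z) by lia.
rewrite IH [in RHS]big_nat_recr //=.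
have -> : (0%:Z - l.+1%:Z = - l.+1%:Z) by lia.
have -> : ((2 * l + 1).+1%:Z - l.+1%:Z = l.+1%:Z) by lia.
ring.
Qed.

Lemma mem_outs l i : (1 <= i <= l)%N -> (i%:Z \in outs l) && (- i%:Z \in outs l).
Proof.
move=> /andP[i1 il]; apply/andP; split; apply/mapP.
  by exists (i + l)%N; [rewrite mem_iota; lia | lia].
by exists (l - i)%N; [rewrite mem_iota; lia | lia].
Qed.

Lemma KL_phi {T : eqType} (s : seq T) (P Q : T -> R) :
  KL s P Q = \sum_(x <- s) phi (P x) (Q x).
Proof.
rewrite /KL big_mkcond; apply: eq_bigr => x _.
by case: eqP => [->|_] //; rewrite /phi mul0r.
Qed.

Lemma out_dist_eq (p : int -> R) PX y :
  out_dist p PX y = PX false * p y + PX true * p (- y).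
Proof. by rewrite /out_dist big_cons big_seq1 /chan. Qed.

Lemma phi_scale w u v : w != 0 -> phi (w * u) (w * v) = w * phi u v.
Proof.
move=> w0; rewrite /phi -mulrA; congr (_ * (_ * ln _)).
by rewrite invfM mulrACA divff // mul1r.
Qed.

Definition thf (u v : R) := if u + v == 0 then 0 else (u - v) / (u + v).

Lemma pair_eq u v a b : 0 <= u -> 0 <= v ->
  phi (a * u + (1 - a) * v) (b * u + (1 - b) * v)
  + phi (a * v + (1 - a) * u) (b * v + (1 - b) * u)
  = (u + v) * F (thf u v * (2 * a - 1)) (thf u v * (2 * b - 1)).
Proof.
move=> u0 v0; rewrite /thf.
have [w0|w0] := eqVneq (u + v) 0.
  have -> : u = 0 by lra.
  have -> : v = 0 by lra.
  by rewrite !mulr0 !addr0 phi_same mul0r; lra.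
set th := (u - v) / (u + v).
have e : forall c, c * u + (1 - c) * v = (u + v) * ((1 + th * (2 * c - 1)) / 2).
  by move=> c; rewrite /th; field; exact: w0.
have e' : forall c, c * v + (1 - c) * u = (u + v) * ((1 - th * (2 * c - 1)) / 2).
  by move=> c; rewrite /th; field; exact: w0.
by rewrite (e a) (e b) (e' a) (e' b) !phi_scale // /F; ring.
Qed.

Lemma thf_bound u v : 0 <= u -> 0 <= v -> -1 <= thf u v <= 1.
Proof.
move=> u0 v0; rewrite /thf; case: eqP => [_|/eqP w0]; first by lra.
have wp : 0 < u + v by lra.
by rewrite ler_pdivlMr // ler_pdivrMr //; apply/andP; split; lra.
Qed.

Lemma KLin_eq PX QX : bin_dist PX -> bin_dist QX ->
  KL [:: false; true] PX QX = F (2 * PX false - 1) (2 * QX false - 1).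
Proof.
move=> [h1 [h2 h3]] [k1 [k2 k3]].
rewrite KL_phi big_cons big_seq1 /F.
have -> : (1 + (2 * PX false - 1)) / 2 = PX false by field.
have -> : (1 + (2 * QX false - 1)) / 2 = QX false by field.
have -> : (1 - (2 * PX false - 1)) / 2 = 1 - PX false by field.
have -> : (1 - (2 * QX false - 1)) / 2 = 1 - QX false by field.
have -> : PX true = 1 - PX false by lra.
by have -> : QX true = 1 - QX false by lra.
Qed.

Definition coefs (p : int -> R) (i : nat) := thf (p i%:Z) (p (- i%:Z)).

Lemma KLout_eq l p PX QX : biso l p -> bin_dist PX -> bin_dist QX ->
  KL (outs l) (out_dist p PX) (out_dist p QX) =
  \sum_(1 <= i < l.+1) (p i%:Z + p (- i%:Z)) *
     F (coefs p i * (2 * PX false - 1)) (coefs p i * (2 * QX false - 1)).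
Proof.
move=> [l1 [pp _]] [h1 [h2 h3]] [k1 [k2 k3]].
rewrite KL_phi sum_outs !out_dist_eq oppr0.
rewrite -mulrDl -mulrDl h3 k3 !mul1r phi_same add0r.
rewrite big_nat_cond [RHS]big_nat_cond; apply: eq_bigr => i /andP[/andP[i1 i2] _].
have /andP[m1 m2] : (i%:Z \in outs l) && (- i%:Z \in outs l).
  by apply: mem_outs; rewrite i1 -ltnS i2.
rewrite !out_dist_eq !opprK /coefs -pair_eq; try exact: pp.
have -> : PX true = 1 - PX false by lra.
by have -> : QX true = 1 - QX false by lra.
Qed.

Definition Tf l (p : int -> R) := \sum_(1 <= i < l.+1) (p i%:Z + p (- i%:Z)) * coefs p i ^+ 2.

Lemma pos_pm l (p : int -> R) i : biso l p -> (1 <= i < l.+1)%N -> 0 <= p i%:Z /\ 0 <= p (- i%:Z).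
Proof.
move=> [_ [pp _]] /andP[i1 i2].
have /andP[m1 m2] : (i%:Z \in outs l) && (- i%:Z \in outs l).
  by apply: mem_outs; rewrite i1 -ltnS i2.
by split; apply: pp.
Qed.

Lemma formula_eq l (p : int -> R) : biso_formula l p = Tf l p.
Proof.
rewrite /biso_formula /Tf; apply: eq_bigr => i _.
rewrite /coefs /thf; case: eqP => [->|/eqP w0]; first by rewrite mul0r.
by field.
Qed.

Lemma Tf_ge0 l (p : int -> R) : biso l p -> 0 <= Tf l p.
Proof.
move=> hb; rewrite /Tf big_nat_cond; apply: sumr_ge0 => i /andP[hi _].
have [h1 h2] := @pos_pm l p i hb hi.
by apply: mulr_ge0; [lra | exact: sqr_ge0].
Qed.

Lemma ratio_le l (p : int -> R) r : biso l p -> KL_ratios l p r -> r <= Tf l p.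
Proof.
move=> hb [PX [QX [bp bq ac pos ->]]].
have [a1 [a2 a3]] := bp; have [b1 [b2 b3]] := bq.
have neq : PX false != QX false.
  apply/eqP => e; move: pos; rewrite KLin_eq // e F_same; lra.
have bpos : 0 < QX false.
  rewrite lt_neqAle b1 andbT; apply/eqP => e.
  have := ac false; rewrite inE eqxx /= => /(_ isT (esym e)) e2.
  by move: neq; rewrite e2 -e eqxx.
have blt : QX false < 1.
  rewrite lt_neqAle; apply/andP; split; last by lra.
  apply/eqP => e.
  have := ac true; rewrite !inE eqxx orbT => /(_ isT); rewrite (_ : QX true = 0); last by lra.
  move=> /(_ erefl) e2.
  have e3 : PX false = 1 by lra.
  by move: neq; rewrite e e3 eqxx.
rewrite ler_pdivrMr // KLout_eq // KLin_eq // /Tf mulr_suml.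
rewrite big_nat_cond [X in _ <= X]big_nat_cond; apply: ler_sum => i /andP[hi _].
have [h1 h2] := @pos_pm l p i hb hi.
rewrite -mulrA; apply: ler_wpM2l; first by lra.
apply: core; first (apply/andP; split; lra); first (apply/andP; split; lra).
exact: thf_bound.
Qed.

Lemma ratio_ge l (p : int -> R) (e : R) : biso l p -> 0 < e < 1 ->
  exists2 r, KL_ratios l p r & Tf l p * (1 - e ^+ 2) <= r.
Proof.
move=> hb /andP[e0 e1].
pose PX := fun x : bool => if x then (1 - e) / 2 else (1 + e) / 2.
pose QX := fun x : bool => (2 : R)^-1.
have bp : bin_dist PX by rewrite /bin_dist /PX /=; split; [lra|split; lra].
have bq : bin_dist QX by rewrite /bin_dist /QX /=; split; [lra|split; lra].
have hin : KL [:: false; true] PX QX = F e 0.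
  rewrite KLin_eq // /PX /QX /=.
  by congr F; field.
have hout : KL (outs l) (out_dist p PX) (out_dist p QX) =
    \sum_(1 <= i < l.+1) (p i%:Z + p (- i%:Z)) * F (coefs p i * e) 0.
  rewrite KLout_eq //; apply: eq_bigr => i _; rewrite /PX /QX /=.
  have -> : 2 * ((1 + e) / 2) - 1 = e by field.
  have -> : 2 * (2 : R)^-1 - 1 = 0 by field.
  by rewrite mulr0.
have din_lo : e ^+ 2 / 2 <= F e 0 by apply: B1; apply/andP; split; lra.
have din_hi : F e 0 <= e ^+ 2 / (2 * (1 - e ^+ 2)) by apply: B2; apply/andP; split; lra.
have dpos : 0 < F e 0 by apply: lt_le_trans din_lo; nra.
have nlo : Tf l p * (e ^+ 2 / 2) <= KL (outs l) (out_dist p PX) (out_dist p QX).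
  rewrite hout /Tf mulr_suml big_nat_cond [X in _ <= X]big_nat_cond.
  apply: ler_sum => i /andP[hi _].
  have [h1 h2] := @pos_pm l p i hb hi.
  have cb := thf_bound _ _ h1 h2.
  rewrite -!mulrA; apply: ler_wpM2l; first by lra.
  have -> : coefs p i * (coefs p i * (e * (e / 2))) = (coefs p i * e) ^+ 2 / 2 by ring.
  apply: B1; move: cb; rewrite -/(coefs p i) => /andP[c1 c2].
  apply/andP; split; nra.
exists (KL (outs l) (out_dist p PX) (out_dist p QX) / KL [:: false; true] PX QX).
  exists PX, QX; split => //.
    by move=> x _; rewrite /QX => /eqP; rewrite invr_eq0 pnatr_eq0.
  by rewrite hin.
rewrite hin ler_pdivlMr //.
apply: le_trans nlo.
have T0 := @Tf_ge0 l p hb.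
have q : 0 < 1 - e ^+ 2 by nra.
apply: le_trans (_ : Tf l p * (1 - e ^+ 2) * (e ^+ 2 / (2 * (1 - e ^+ 2))) <= _).
  by apply: ler_wpM2l => //; apply: mulr_ge0 => //; exact: ltW.
rewrite -mulrA; apply: ler_wpM2l => //.
rewrite le_eqVlt; apply/orP; left; apply/eqP; field.
by rewrite gt_eqF.
Qed.
End S.

Theorem mainTheorem1 (R : realType) (l : nat) (p : int -> R) :
  biso l p -> eta_KL l p = biso_formula l p.
Proof.
move=> hb; rewrite (@formula_eq R l p) /eta_KL.
set T := @Tf R l p.
have T0 : 0 <= T := @Tf_ge0 R l p hb.
have ub : ubound (KL_ratios l p) T by move=> r hr; exact: (@ratio_le R l p r hb hr).
have ne : KL_ratios l p !=set0.
  have [r hr _] := @ratio_ge R l p (2^-1) hb (ltac:(apply/andP; split; lra)).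
  by exists r.
apply/eqP; rewrite eq_le; apply/andP; split; first exact: ge_sup.
apply/ler_addgt0Pr => e e0.
set eps := Num.min (2^-1) (e / (T + 1)).
have epsp : 0 < eps by rewrite lt_min; apply/andP; split; [lra | apply: divr_gt0; lra].
have eps1 : eps <= 2^-1 by rewrite ge_min lexx.
have eps2 : eps * (T + 1) <= e by rewrite -ler_pdivlMr ?ge_min ?lexx ?orbT //; lra.
have [r hr hr2] := @ratio_ge R l p eps hb (ltac:(apply/andP; split; lra)).
have rs : r <= sup (KL_ratios l p) by apply: ub_le_sup => //; exists T.
have h1 : 0 <= T * (eps - eps ^+ 2).
  by apply: mulr_ge0 => //; rewrite expr2; nra.
move: hr2; rewrite mulrBr mulr1 => hr2.
rewrite -/T in hr2; rewrite mulrBr in h1; rewrite mulrDr mulr1 (mulrC eps T) in eps2.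
lra.
Qed.
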